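(* Let $h,n\geq 2$ with $h\leq n!$. Then every subgroup of $S_h\times\{id\}$ is an anonymity group with respect to $(h,n)$.
   Context: Permutations compose as $(\sigma\tau)(x)=\sigma(\tau(x))$. Let $G=S_h\times S_n$ and $\mathcal{P}=(S_n)^h$ (preference profiles), with $G$ acting by $(p^{(\varphi,\psi)})_i=\psi\,p_{\varphi^{-1}(i)}$. A social preference function (SPF) is any $F:\mathcal{P}\to S_n$; its symmetry group is $G(F)=\{(\varphi,\psi)\in G: F(p^{(\varphi,\psi)})=\psi F(p)\ \forall p\}$ and its anonymity group is $G_1(F)=G(F)\cap(S_h\times\{id\})$. A subgroup $U\leq S_h\times\{id\}$ is an anonymity group with respect to $(h,n)$ if $U=G_1(F)$ for some SPF $F$. *)

(* Defs.v *)
From mathcomp Require Import all_boot all_fingroup.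
Set Implicit Arguments. Unset Strict Implicit. Unset Printing Implicit Defensive.
Local Open Scope group_scope.

(* Preference profiles: h-tuples of linear orders (permutations of 'I_n). *)
Definition profile (h n : nat) := {ffun 'I_h -> 'S_n}.

(* Composition convention of the paper: (s t)(x) = s (t x).
   In mathcomp, (s * t) x = t (s x), so paper's s t is mathcomp's t * s. *)
Definition pcomp (n : nat) (s t : 'S_n) : 'S_n := t * s.

Definition act_profile (h n : nat) (p : profile h n) (phi : 'S_h) (psi : 'S_n)
  : profile h n := [ffun i => pcomp psi (p (phi^-1 i))].

Definition SPF (h n : nat) := profile h n -> 'S_n.

Definition symmetry_group (h n : nat) (F : SPF h n) : {set 'S_h * 'S_n} :=
  [set g : 'S_h * 'S_n |
    [forall p : profile h n, F (act_profile p g.1 g.2) == pcomp g.2 (F p)]].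

Definition anonymity_group (h n : nat) (F : SPF h n) : {set 'S_h * 'S_n} :=
  symmetry_group F :&: [set g : 'S_h * 'S_n | g.2 == 1].

Definition is_anonymity_group (h n : nat) (U : {set 'S_h * 'S_n}) : Prop :=
  exists F : SPF h n, U = anonymity_group F.

(* Main.v *)
Require Import Defs.
From mathcomp Require Import all_boot all_fingroup.
Local Open Scope group_scope.

Lemma pcomp1 n (s : 'S_n) : Defs.pcomp 1 s = s.
Proof. exact: mulg1. Qed.

Theorem mainTheorem4 (h n : nat) (hh : 2 <= h) (hn : 2 <= n) (hle : h <= n`!)
  (U : {group 'S_h * 'S_n}) (hU : U \subset [set g : 'S_h * 'S_n | g.2 == 1%g]) :
  is_anonymity_group U.
Proof.
have hle' : h <= #|{perm 'I_n}| by rewrite card_Sn.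
pose q : profile h n := [ffun i => enum_val (widen_ord hle' i)].
have qinj : forall i j, q i = q j -> i = j.
  move=> i j; rewrite !ffunE => /enum_val_inj /(congr1 val) /= E.
  by apply: val_inj.
have h0 : 0 < n by apply: leq_trans hn.
pose tau : 'S_n := tperm (Ordinal h0) (Ordinal hn).
have tau1 : tau != 1.
  apply/eqP => /(congr1 (fun s : 'S_n => s (Ordinal h0))).
  by rewrite /tau tpermL perm1 => /(congr1 val).
pose F : SPF h n := fun p =>
  if [exists u in U, [forall i, p (u.1 i) == q i]] then 1 else tau.
have actE : forall (p : profile h n) (phi : 'S_h) i, act_profile p phi 1 i = p (phi^-1 i).
  by move=> p phi i; rewrite /act_profile /Defs.pcomp (ffunE (fun i => p (phi^-1 i) * 1)) mulg1.
have inv1 : forall (g : 'S_h * 'S_n) (p : profile h n), g \in U ->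
    [exists u in U, [forall i, p (u.1 i) == q i]] ->
    [exists u in U, [forall i, act_profile p g.1 1 (u.1 i) == q i]].
  move=> g p gU /existsP [u /andP [uU /forallP Hu]].
  apply/existsP; exists (u * g); rewrite groupM //=.
  apply/forallP => i; rewrite actE permM permK; exact: Hu.
have g2 : forall g, g \in U -> g.2 = 1.
  by move=> g /(subsetP hU); rewrite inE => /eqP.
exists F; apply/setP => g; rewrite !inE.
apply/idP/idP.
- move=> gU; rewrite g2 // eqxx andbT; apply/forallP => p.
  rewrite pcomp1 /F.
  have -> : [exists u in U, [forall i, act_profile p g.1 1 (u.1 i) == q i]]
          = [exists u in U, [forall i, p (u.1 i) == q i]]; last by [].
  apply/idP/idP; last exact: inv1.
  move=> H; have := inv1 g^-1 _ (groupVr gU) H.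
  have -> : act_profile (act_profile p g.1 1) (g^-1).1 1 = p.
    by apply/ffunP => i; rewrite !actE /= invgK permK.
  by [].
- case/andP => /forallP H /eqP e2.
  apply/negPn/negP => gU.
  have := H q; rewrite e2 pcomp1 /F.
  have -> : [exists u in U, [forall i, q (u.1 i) == q i]].
    by apply/existsP; exists 1; rewrite group1 /=; apply/forallP => i; rewrite perm1.
  case: ifP => [/existsP [u /andP [uU /forallP Hu]] _ | _ /eqP]; last by move=> E; move: tau1; rewrite E eqxx.
  have E : u.1 = g.1.
    apply/permP => i; have := Hu i; rewrite actE => /eqP /qinj E1.
    by rewrite -[LHS](permKV g.1) E1.
  have : u = g by rewrite [u]surjective_pairing [g]surjective_pairing E (g2 _ uU) e2.
  by move=> ug; rewrite -ug uU in gU.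
Qed.
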